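(* Let $U$ be a nonzero subspace of $\mathbb{F}_q^n$ and let $u$ be the minimum element of $U\setminus\{0\}$ with respect to the total order $\prec$ on $\mathbb{F}_q^n$. Then $u$ is the last row of the reduced row echelon form of a generator matrix of $U$.
   Context: Fix a total order $\prec$ on $\mathbb{F}_q$ such that $0\prec1\prec\alpha$ for all $\alpha\in\mathbb{F}_q\setminus\{0,1\}$, and extend it lexicographically to a total order $\prec$ on $\mathbb{F}_q^n$. The reduced row echelon form of a $k$-dimensional subspace is its unique $k\times n$ generator matrix in reduced row echelon form (the leading nonzero positions of the rows increase from top to bottom). *)

(* Defs.v *)
From HB Require Import structures.
From mathcomp Require Import all_boot all_order all_algebra all_field.
Set Implicit Arguments. Unset Strict Implicit. Unset Printing Implicit Defensive.
Import GRing.Theory.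
Local Open Scope ring_scope.

Definition strict_total_order (F : eqType) (lt : rel F) : Prop :=
  [/\ (forall a, ~~ lt a a),
      (forall a b c, lt a b -> lt b c -> lt a c)
    & (forall a b, a != b -> lt a b || lt b a)].

Definition admissible_order (F : finFieldType) (lt : rel F) : Prop :=
  [/\ strict_total_order lt, lt 0 1
    & (forall a : F, a != 0 -> a != 1 -> lt 1 a)].

Definition lex_lt (F : finFieldType) (lt : rel F) (n : nat)
    (x y : 'rV[F]_n) : bool :=
  [exists i : 'I_n,
     [forall j : 'I_n, (j < i)%N ==> (x 0 j == y 0 j)] && lt (x 0 i) (y 0 i)].

Definition is_rref (F : fieldType) (k n : nat) (R : 'M[F]_(k, n)) : Prop :=
  exists lead : 'I_k -> 'I_n,
    [/\ (forall (i : 'I_k) (j : 'I_n), (j < lead i)%N -> R i j = 0),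
        (forall i : 'I_k, R i (lead i) = 1),
        (forall i i' : 'I_k, (i < i')%N -> (lead i < lead i')%N)
      & (forall i i' : 'I_k, i != i' -> R i' (lead i) = 0)].

(* Main.v *)
Require Import Defs.
From mathcomp Require Import all_boot all_order all_algebra all_field.
Local Open Scope ring_scope.
Import GRing.Theory.

Lemma lex_contra (F : finFieldType) (lt : rel F) n (x y : 'rV[F]_n) (a : 'I_n) :
  strict_total_order lt ->
  (forall j : 'I_n, (j < a)%N -> x 0 j = y 0 j) -> x 0 a != y 0 a ->
  ~~ lt (x 0 a) (y 0 a) -> ~~ lex_lt lt x y.
Proof.
move=> [irr _ _] Heq Hne Hnlt; apply/negP => /existsP [i /andP [/forallP Hall Hlt]].
case: (ltngtP i a) => [ia|ai|/val_inj ia].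
- by move: Hlt; rewrite Heq // (negbTE (irr _)).
- by move: (Hall a); rewrite ai /= (negbTE Hne).
- by move: Hlt; rewrite ia (negbTE Hnlt).
Qed.

Theorem lemma5p3 (F : finFieldType) (lt : rel F) (n m : nat)
    (A : 'M[F]_(m, n)) (u : 'rV[F]_n) :
  admissible_order lt ->
  A != 0 ->
  (u <= A)%MS -> u != 0 ->
  (forall v : 'rV[F]_n, (v <= A)%MS -> v != 0 -> v != u -> lex_lt lt u v) ->
  forall (k : nat) (R : 'M[F]_(k.+1, n)),
    is_rref R -> (R == A)%MS -> row ord_max R = u.
Proof.
move=> [Hsto H01 H1a] _ uA u0 Hmin k R [lead [Hz H1 Hinc Hpiv]] /andP [RA AR].
have [irr trans _] := Hsto.
have lt0 : forall x : F, x != 0 -> lt 0 x.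
  move=> x x0; case: (eqVneq x 1) => [->|x1] //; exact: trans (H1a _ x0 x1).
have Hle : forall i i' : 'I_k.+1, (i <= i')%N -> (lead i <= lead i')%N.
  move=> i i'; rewrite leq_eqVlt => /orP [/eqP/val_inj ->//|/Hinc]; exact: ltnW.
have uR : (u <= R)%MS by exact: submx_trans uA AR.
have [w Hw] := submxP uR.
have Hu : forall j, u 0 j = \sum_l w 0 l * R l j by move=> j; rewrite Hw mxE.
have Hwc : forall i, w 0 i = u 0 (lead i).
  move=> i; rewrite Hu (bigD1 i) //= H1 mulr1 big1 ?addr0 // => l li.
  by rewrite Hpiv ?mulr0 // eq_sym.
set r := row ord_max R.
have rA : (r <= A)%MS by exact: submx_trans (row_sub _ _) RA.
have r0 : r != 0.
  apply/eqP => /matrixP /(_ 0 (lead ord_max)); rewrite !mxE H1 => /eqP.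
  by rewrite oner_eq0.
case: (eqVneq r u) => // ru.
have Hlex := Hmin r rA r0 ru.
have re : forall j, r 0 j = R ord_max j by move=> j; rewrite mxE.
case: (boolP [exists i, (i != ord_max) && (u 0 (lead i) != 0)]).
- move=> /existsP [i1 Pi1].
  case: (@arg_minnP _ i1 (fun i : 'I_k.+1 => (i != ord_max) && (u 0 (lead i) != 0)) (fun i => val i) Pi1) => i0 /andP [i0m ci0] Hm.
  have i0lt : (val i0 < val (@ord_max k))%N.
    have := ltn_ord i0; rewrite ltnS leq_eqVlt => /orP [/eqP e|//].
    by move: i0m; rewrite -(inj_eq val_inj) /= e eqxx.
  exfalso; move: Hlex; apply/negP; apply: (@lex_contra _ _ _ _ _ (lead i0) Hsto).
  + move=> j ja; rewrite re Hz; last exact: ltn_trans ja (Hinc _ _ i0lt).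
    rewrite Hu big1 // => l _.
    case: (ltnP l i0) => [li|il].
      suff -> : w 0 l = 0 by rewrite mul0r.
      have lk := ltn_trans li i0lt.
      rewrite Hwc; apply/eqP; apply: contraTT li => cl; rewrite -leqNgt.
      apply: Hm; rewrite cl andbT -(inj_eq val_inj) /= neq_ltn.
      by rewrite lk.
    by rewrite Hz ?mulr0 // (leq_trans ja (Hle _ _ il)).
  + by rewrite re Hpiv.
  + rewrite re Hpiv //; apply/negP => /(trans _ _ _ (lt0 _ ci0)).
    by rewrite (negbTE (irr _)).
- rewrite negb_exists => /forallP Hall.
  have Hc : forall i, i != ord_max -> w 0 i = 0.
    by move=> i im; move: (Hall i); rewrite im Hwc /= negbK => /eqP.
  set c := w 0 ord_max.
  have Huc : u = c *: r.
    apply/matrixP => i j; rewrite ord1 [RHS]mxE re Hu (bigD1 ord_max) //=.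
    by rewrite big1 ?addr0 // => l /Hc ->; rewrite mul0r.
  have c0 : c != 0 by apply: contra_neq u0 => c0; rewrite Huc c0 scale0r.
  have c1 : c != 1 by apply: contra_neq ru => c1; rewrite Huc c1 scale1r.
  exfalso; move: Hlex; apply/negP; apply: (@lex_contra _ _ _ _ _ (lead ord_max) Hsto).
  + by move=> j ja; rewrite Huc mxE re Hz ?mulr0.
  + by rewrite Huc !mxE H1 mulr1.
  + rewrite Huc !mxE H1 mulr1; apply/negP => /(trans _ _ _ (H1a _ c0 c1)).
    by rewrite (negbTE (irr _)).
Qed.
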